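(* For any mechanism $(q_i,P_i)_{i\in\mathcal I}$ (with opt-out messages) and any nonnegative numbers $\alpha_i(m_i'\mid m_i)\ge 0$, $i\in\mathcal I$, $(m_i,m_i')\in M_i\times M_i$, we have for every $v\in V$: $$\min_{m\in M}\mathrm{Rev}(v,m)\le v.$$ In particular $\sum_v p(v)\min_m\mathrm{Rev}(v,m)\le\sum_v v\,p(v)$.
   Context: A mechanism for buyers $\mathcal I=\{1,\ldots,I\}$ with common value $v\in V=\{0,\nu,\ldots,1\}$ consists of finite message sets $M_i$ ($M=\prod_iM_i$), allocation rules $q_i:M\to[0,1]$ with $\sum_iq_i(m)\le1$, and payment rules $P_i:M\to\mathbb R$, where each $M_i$ contains an opt-out message $0$ with $q_i(0,m_{-i})=P_i(0,m_{-i})=0$ for all $m_{-i}$. $U_i(v,m)=v\,q_i(m)-P_i(m)$. Virtual revenue: $\mathrm{Rev}(v,m)=\sum_i\Big(P_i(m)+\sum_{m_i'\in M_i}\big(U_i(v,(m_i',m_{-i}))-U_i(v,m)\big)\alpha_i(m_i'\mid m_i)\Big)$. *)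

(* Defs.v *)
From HB Require Import structures.
From mathcomp Require Import all_boot all_order all_algebra.
Set Implicit Arguments. Unset Strict Implicit. Unset Printing Implicit Defensive.
Import Order.TTheory GRing.Theory Num.Theory.
Local Open Scope ring_scope.

Definition profile (I : nat) (M : 'I_I -> finType) := {dffun forall i : 'I_I, M i}.

(* (x, m_{-i}) : replace buyer i's message in m by x. *)
Definition upd (I : nat) (M : 'I_I -> finType) (m : profile M) (i : 'I_I) (x : M i)
  : profile M :=
  [ffun j => if (i =P j) is ReflectT e then ecast k (M k) e x else m j].
Arguments upd {I M} m i x.

Definition is_mechanism (R : realFieldType) (I : nat) (M : 'I_I -> finType)
  (opt : forall i, M i) (q P : 'I_I -> profile M -> R) : Prop :=
  [/\ (forall i m, 0 <= q i m),
      (forall m, \sum_(i < I) q i m <= 1),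
      (forall i (m : profile M), q i (upd m i (opt i)) = 0) &
      (forall i (m : profile M), P i (upd m i (opt i)) = 0)].

Definition util (R : realFieldType) (I : nat) (M : 'I_I -> finType)
  (q P : 'I_I -> profile M -> R) (i : 'I_I) (v : R) (m : profile M) : R :=
  v * q i m - P i m.

(* Virtual revenue; alpha i m' mi stands for alpha_i(m' | m_i). *)
Definition Rev (R : realFieldType) (I : nat) (M : 'I_I -> finType)
  (q P : 'I_I -> profile M -> R) (alpha : forall i, M i -> M i -> R)
  (v : R) (m : profile M) : R :=
  \sum_(i < I) (P i m + \sum_(x : M i)
      (util q P i v (upd m i x) - util q P i v m) * alpha i x (m i)).

(* The all-opt-out profile (witness that M is nonempty). *)
Definition opt_profile (I : nat) (M : 'I_I -> finType) (opt : forall i, M i)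
  : profile M := [ffun i => opt i].

Definition minRev (R : realFieldType) (I : nat) (M : 'I_I -> finType)
  (opt : forall i, M i) (q P : 'I_I -> profile M -> R)
  (alpha : forall i, M i -> M i -> R) (v : R) : R :=
  \big[Num.min/Rev q P alpha v (opt_profile opt)]_(m : profile M) Rev q P alpha v m.

Definition gridV (R : realFieldType) (N : nat) (k : 'I_N.+1) : R := k%:R / N%:R.

(* Main.v *)
Require Import Defs.
From HB Require Import structures.
From mathcomp Require Import all_boot all_order all_algebra ring lra.
Set Implicit Arguments. Unset Strict Implicit. Unset Printing Implicit Defensive.
Import Order.TTheory GRing.Theory Num.Theory.
Local Open Scope ring_scope.

Section Stat.
Variable R : realFieldType.
Variable T : finType.

Lemma stat n : forall (S : {set T}) (b : T -> T -> R), #|S| = n.+1 ->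
  (forall x y, 0 <= b x y) ->
  exists pi : T -> R, [/\ (forall x, 0 <= pi x), (exists2 x, x \in S & 0 < pi x) &
    forall x, x \in S -> \sum_(y in S) pi y * b x y = pi x * \sum_(y in S) b y x].
Proof.
elim: n => [|n IH] S b hS hb.
  have [z Sz] : exists z, z \in S by apply/set0Pn; rewrite -card_gt0 hS.
  have SE : S = [set z] by apply/eqP; rewrite eq_sym eqEcard sub1set Sz cards1 hS.
  exists (fun x => if x == z then 1 else 0); split.
  - by move=> x; case: ifP.
  - by exists z; rewrite ?eqxx.
  move=> x; rewrite SE in_set1 => /eqP ->.
  by rewrite !big_set1 eqxx mul1r.
have [z Sz] : exists z, z \in S by apply/set0Pn; rewrite -card_gt0 hS.
set S' := S :\ z.
have hS' : #|S'| = n.+1 by move: hS; rewrite (cardsD1 z) Sz add1n; case.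
have splitS : forall F : T -> R, \sum_(y in S) F y = F z + \sum_(y in S') F y.
  move=> F; rewrite (bigD1 z) //=; congr (_ + _); apply: eq_bigl => y.
  by rewrite /S' in_setD1 andbC.
set o := \sum_(w in S') b w z.
have o_ge0 : 0 <= o by apply: sumr_ge0.
have [o0|onz] := eqVneq o 0.
  have bz0 : forall x, x \in S' -> b x z = 0.
    move=> x xS; apply/eqP; rewrite eq_le hb andbT -o0 /o (bigD1 x) //=.
    by rewrite lerDl sumr_ge0.
  exists (fun x => if x == z then 1 else 0); split.
  - by move=> x; case: ifP.
  - by exists z; rewrite ?eqxx.
  move=> x xS.
  rewrite !splitS /= eqxx big1 ?addr0; last by move=> y; rewrite /S' in_setD1 => /andP[/negbTE -> _]; rewrite mul0r.
  rewrite mul1r.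
  case: (eqVneq x z) => [->|xz].
    by rewrite mul1r -/o o0 addr0.
  by rewrite mul0r bz0 // /S' in_setD1 xz.
have opos : 0 < o by rewrite lt_def onz.
pose b' x y := b x y + b z y * b x z / o.
have hb' : forall x y, 0 <= b' x y.
  by move=> x y; rewrite /b' addr_ge0 // divr_ge0 // mulr_ge0.
have [pi' [pi'0 [x0 x0S x0p] pi'st]] := IH S' b' hS' hb'.
pose rho := (\sum_(y in S') pi' y * b z y) / o.
exists (fun x => if x == z then rho else pi' x); split.
- move=> x; case: ifP => // _; rewrite divr_ge0 // sumr_ge0 // => y _.
  by rewrite mulr_ge0.
- exists x0; first by move: x0S; rewrite /S' in_setD1 => /andP[].
  by move: x0S; rewrite /S' in_setD1 => /andP[/negbTE ->].
move=> x xS.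
rewrite !splitS /= eqxx.
have E : \sum_(y in S') (if y == z then rho else pi' y) * b x y
     = \sum_(y in S') pi' y * b x y.
  by apply: eq_bigr => y; rewrite /S' in_setD1 => /andP[/negbTE ->].
rewrite E.
case: (eqVneq x z) => [->|xz].
  rewrite -/o /rho. field; exact: onz.
have xS' : x \in S' by rewrite /S' in_setD1 xz.
have := pi'st x xS'.
rewrite /b' /=.
have -> : \sum_(y in S') pi' y * (b x y + b z y * b x z / o)
   = \sum_(y in S') pi' y * b x y + rho * b x z.
  rewrite /rho !big_distrl -big_split /=; apply: eq_bigr => y _.
  by field.
have -> : \sum_(y in S') (b y x + b z x * b y z / o)
   = \sum_(y in S') b y x + b z x.
  rewrite big_split /=; congr (_ + _).
  rewrite -big_distrl -big_distrr /= -/o; by field.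
by move=> H; rewrite addrC H (addrC (b z x)).
Qed.
End Stat.
Section Upd.
Variables (I : nat) (M : 'I_I -> finType).
Implicit Types (m : profile M) (i j : 'I_I).

Lemma upd_same m i (x : M i) : upd m i x i = x.
Proof.
rewrite /upd ffunE; case: (i =P i) => // e.
by rewrite (eq_irrelevance e erefl).
Qed.

Lemma upd_other m i (x : M i) j : i != j -> upd m i x j = m j.
Proof. by move=> ij; rewrite /upd ffunE; case: (i =P j) => // e; exfalso; move/eqP: ij; apply. Qed.

Lemma upd_upd m i (x y : M i) : upd (upd m i x) i y = upd m i y.
Proof.
apply/ffunP => j; case: (eqVneq i j) => [<-|ij]; first by rewrite !upd_same.
by rewrite !upd_other.
Qed.

Lemma upd_id m i : upd m i (m i) = m.
Proof.
apply/ffunP => j; case: (eqVneq i j) => [<-|ij]; first by rewrite !upd_same.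
by rewrite !upd_other.
Qed.

Lemma upd_eq m i (c : M i) : (upd m i c == m) = (m i == c).
Proof.
apply/eqP/eqP => [<-|<-]; first by rewrite upd_same.
exact: upd_id.
Qed.

Variable R : realFieldType.

Lemma sum_split i (c : M i) (F : profile M -> R) :
  \sum_(m : profile M) F m = \sum_(m : profile M | m i == c) \sum_(y : M i) F (upd m i y).
Proof.
rewrite (partition_big (fun m : profile M => m i) xpredT) //=.
rewrite exchange_big /=; apply: eq_bigr => y _.
rewrite (reindex_onto (fun m : profile M => upd m i y) (fun m : profile M => upd m i c)) /=; last first.
  by move=> m /eqP <-; rewrite upd_upd upd_id.
apply: eq_bigl => m; rewrite upd_same eqxx /= upd_upd upd_eq.
done.
Qed.
End Upd.
Section Main.
Variables (R : realFieldType) (I : nat) (M : 'I_I -> finType).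

Lemma stat_zero (T : finType) (pi g : T -> R) (b : T -> T -> R) :
  (forall x, \sum_y pi y * b x y = pi x * \sum_y b y x) ->
  \sum_y pi y * \sum_x (g x - g y) * b x y = 0.
Proof.
move=> st.
have -> : \sum_y pi y * \sum_x (g x - g y) * b x y
   = \sum_y \sum_x (pi y * b x y * g x) - \sum_y \sum_x (pi y * b x y * g y).
  rewrite -sumrB; apply: eq_bigr => y _; rewrite -sumrB big_distrr /=.
  by apply: eq_bigr => x _; ring.
rewrite exchange_big /=.
have -> : \sum_x \sum_y pi y * b x y * g x = \sum_x pi x * (\sum_y b y x) * g x.
  by apply: eq_bigr => x _; rewrite -big_distrl /= st.
have -> : \sum_y \sum_x pi y * b x y * g y = \sum_y pi y * (\sum_x b x y) * g y.
  by apply: eq_bigr => y _; rewrite big_distrr big_distrl.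
by rewrite subrr.
Qed.

Lemma stat_full (T : finType) (t0 : T) (b : T -> T -> R) :
  (forall x y, 0 <= b x y) ->
  exists pi : T -> R, [/\ (forall x, 0 <= pi x), (exists x, 0 < pi x) &
    forall x, \sum_y pi y * b x y = pi x * \sum_y b y x].
Proof.
move=> hb.
have hc : #|[set: T]| = (#|T|.-1).+1.
  have hT : (0 < #|T|)%N by apply/card_gt0P; exists t0.
  by rewrite cardsT prednK.
have [pi [p0 [x _ px] st]] := stat hc hb.
exists pi; split => //; first by exists x.
move=> y; have := st y (in_setT y).
have E : forall F : T -> R, \sum_(z in [set: T]) F z = \sum_z F z.
  by move=> F; apply: eq_bigl => z; rewrite in_setT.
by rewrite !E.
Qed.

Lemma min_le (T : finType) (x0 : R) (F : T -> R) (t : T) :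
  \big[Num.min/x0]_(s : T) F s <= F t.
Proof. by rewrite (bigD1 t) //= ge_min lexx. Qed.

End Main.

Theorem lemma1 (R : realFieldType) (N : nat) (I : nat) (M : 'I_I -> finType)
  (opt : forall i, M i) (q P : 'I_I -> profile M -> R)
  (alpha : forall i, M i -> M i -> R) :
  (0 < N)%N ->
  is_mechanism opt q P ->
  (forall i x y, 0 <= alpha i x y) ->
  (forall k : 'I_N.+1, minRev opt q P alpha (gridV R k) <= gridV R k) /\
  (forall p : 'I_N.+1 -> R, (forall k, 0 <= p k) ->
     \sum_(k < N.+1) p k * minRev opt q P alpha (gridV R k)
       <= \sum_(k < N.+1) gridV R k * p k).
Proof.
move=> N0 [q0 qs qopt Popt] a0.
have key : forall v : R, 0 <= v -> minRev opt q P alpha v <= v.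
  move=> v v0.
  pose b i (x y : M i) := alpha i x y + (x == opt i)%:R.
  have hb : forall i x y, 0 <= b i x y.
    by move=> i x y; rewrite /b addr_ge0 // ler0n.
  have [pi hpi] : exists pi : forall i, M i -> R, forall i,
      [/\ (forall x, 0 <= pi i x), (exists x, 0 < pi i x) &
       forall x, \sum_y pi i y * b i x y = pi i x * \sum_y b i y x].
    apply: (@fin_all_exists _ (fun i => M i -> R) (fun i (f : M i -> R) =>
      [/\ (forall x, 0 <= f x), (exists x, 0 < f x) &
       forall x, \sum_y f y * b i x y = f x * \sum_y b i y x])) => i.
    have := stat_full (opt i) (hb i). move=> H. exact H.
  have pi0 : forall i x, 0 <= pi i x by move=> i; case: (hpi i).
  have pist : forall i x, \sum_y pi i y * b i x y = pi i x * \sum_y b i y x.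
    by move=> i; case: (hpi i).
  have [xs hxs] : exists xs : forall i, M i, forall i, 0 < pi i (xs i).
    apply: (@fin_all_exists _ (fun i => M i) (fun i (x : M i) => 0 < pi i x)) => i.
    by case: (hpi i).
  pose mu (m : profile M) := \prod_j pi j (m j).
  have mu0 : forall m, 0 <= mu m by move=> m; apply: prodr_ge0 => j _.
  pose ms : profile M := [ffun i => xs i].
  have Spos : 0 < \sum_m mu m.
    rewrite (bigD1 ms) //=; apply: (@lt_le_trans _ _ (mu ms)).
      by apply: prodr_gt0 => j _; rewrite ffunE.
    by rewrite lerDl sumr_ge0.
  pose D i (m : profile M) := \sum_(x : M i)
      (util q P i v (upd m i x) - util q P i v m) * b i x (m i).
  have RevE : forall m, Rev q P alpha v m = v * \sum_i q i m + \sum_i D i m.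
    move=> m; rewrite /Rev big_distrr -big_split /=; apply: eq_bigr => i _.
    have -> : D i m = \sum_x (util q P i v (upd m i x) - util q P i v m) * alpha i x (m i)
        + (util q P i v (upd m i (opt i)) - util q P i v m).
      rewrite /D /b; under eq_bigr do rewrite mulrDr.
      rewrite big_split /=; congr (_ + _).
      rewrite (bigD1 (opt i)) //= eqxx mulr1 big1 ?addr0 // => x /negbTE ->.
      by rewrite mulr0.
    rewrite /util qopt Popt; lra.
  have D0 : forall i, \sum_m mu m * D i m = 0.
    move=> i; rewrite (sum_split (opt i)) big1 // => m _.
    pose w := \prod_(j | j != i) pi j (m j).
    have muE : forall y, mu (upd m i y) = pi i y * w.
      move=> y; rewrite /mu (bigD1 i) //= upd_same; congr (_ * _).
      by apply: eq_bigr => j ji; rewrite upd_other // eq_sym.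
    have DE : forall y, D i (upd m i y) = \sum_(x : M i)
        (util q P i v (upd m i x) - util q P i v (upd m i y)) * b i x y.
      by move=> y; rewrite /D upd_same; apply: eq_bigr => x _; rewrite upd_upd.
    under eq_bigr do rewrite muE DE mulrAC.
    rewrite -big_distrl /=.
    have H := stat_zero (fun x => util q P i v (upd m i x)) (pist i).
    simpl in H; by rewrite H mul0r.
  have main : \sum_m mu m * Rev q P alpha v m <= v * \sum_m mu m.
    under eq_bigr do rewrite RevE mulrDr.
    rewrite big_split /=.
    have -> : \sum_m mu m * \sum_i D i m = 0.
      under eq_bigr do rewrite big_distrr.
      by rewrite exchange_big /= big1 // => i _; rewrite D0.
    rewrite addr0 big_distrr /=; apply: ler_sum => m _.
    rewrite mulrC -mulrA; apply: ler_wpM2l => //.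
    by rewrite -[X in _ <= X]mul1r; apply: ler_wpM2r.
  have lo : minRev opt q P alpha v * \sum_m mu m <= \sum_m mu m * Rev q P alpha v m.
    rewrite mulrC big_distrl /=; apply: ler_sum => m _.
    by rewrite ler_wpM2l // /minRev min_le.
  have := le_trans lo main.
  by move=> H; rewrite -(ler_pM2r Spos).
have gv0 : forall k : 'I_N.+1, 0 <= gridV R k.
  by move=> k; rewrite /gridV divr_ge0 // ler0n.
split; first by move=> k; apply: key.
move=> p p0; apply: ler_sum => k _.
by rewrite mulrC ler_wpM2r // key.
Qed.
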